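(* Let $H$ be a complex infinite-dimensional separable Hilbert space and let $(f_n)_{n=1}^\infty$ be a Bessel sequence in $H$ with optimal Bessel bound $B$ and analysis operator $U$, such that there is a Bessel sequence with analysis operator $V$ for which $I-V^*U$ is compact. Then $d=\dim\operatorname{Ker}U<\infty$, any finite sequence $(x_n)_{n=1}^k$ with $(x_n)_{n=1}^k\cup(f_n)_{n=1}^\infty$ a frame for $H$ satisfies $k\ge d$, and if $(w_1,\dots,w_d)$ is an orthonormal basis of $\operatorname{Ker}U$ then $(\sqrt B w_n)_{n=1}^d\cup(f_n)_{n=1}^\infty$ is a frame for $H$.
   Context: Bessel sequence, frame, optimal Bessel bound as usual; the analysis operator is $U:H\to\ell^2$, $Ux=(\langle x,f_n\rangle)_n$. The notation $(x_n)_{n=1}^k\cup(f_n)_{n=1}^\infty$ denotes the sequence $x_1,\dots,x_k,f_1,f_2,\dots$. *)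

(* Defs.v *)
From Stdlib Require Import Reals Lra Lia.
Open Scope R_scope.

Definition Cpx : Type := (R * R)%type.
Definition C0 : Cpx := (0, 0).
Definition C1 : Cpx := (1, 0).
Definition RtoC (r : R) : Cpx := (r, 0).
Definition Cadd (a b : Cpx) : Cpx := (fst a + fst b, snd a + snd b).
Definition Cmul (a b : Cpx) : Cpx :=
  (fst a * fst b - snd a * snd b, fst a * snd b + snd a * fst b).
Definition Cconj (a : Cpx) : Cpx := (fst a, - snd a).
Definition Cabs2 (a : Cpx) : R := fst a * fst a + snd a * snd a.

(** * Complex Hilbert spaces
    Inner product linear in the first argument, conjugate-linear in the second. *)
Record CHilbert := {
  carrier :> Type;
  hzero : carrier;
  hadd : carrier -> carrier -> carrier;
  hopp : carrier -> carrier;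
  hscal : Cpx -> carrier -> carrier;
  inner : carrier -> carrier -> Cpx;
  hadd_assoc : forall x y z, hadd x (hadd y z) = hadd (hadd x y) z;
  hadd_comm : forall x y, hadd x y = hadd y x;
  hadd_zero : forall x, hadd x hzero = x;
  hadd_opp : forall x, hadd x (hopp x) = hzero;
  hscal_assoc : forall a b x, hscal a (hscal b x) = hscal (Cmul a b) x;
  hscal_one : forall x, hscal C1 x = x;
  hscal_distr_vec : forall a x y, hscal a (hadd x y) = hadd (hscal a x) (hscal a y);
  hscal_distr_scal : forall a b x, hscal (Cadd a b) x = hadd (hscal a x) (hscal b x);
  inner_add_l : forall x y z, inner (hadd x y) z = Cadd (inner x z) (inner y z);
  inner_scal_l : forall a x y, inner (hscal a x) y = Cmul a (inner x y);
  inner_conj : forall x y, inner y x = Cconj (inner x y);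
  inner_pos : forall x, 0 <= fst (inner x x);
  inner_def : forall x, inner x x = C0 -> x = hzero;
  hcomplete : forall u : nat -> carrier,
    (forall eps, 0 < eps -> exists N, forall m n, (N <= m)%nat -> (N <= n)%nat ->
        sqrt (fst (inner (hadd (u m) (hopp (u n))) (hadd (u m) (hopp (u n))))) < eps) ->
    exists l, forall eps, 0 < eps -> exists N, forall n, (N <= n)%nat ->
        sqrt (fst (inner (hadd (u n) (hopp l)) (hadd (u n) (hopp l)))) < eps
}.

Section HDefs.
Context {H : CHilbert}.

Definition hsub (x y : H) : H := hadd H x (hopp H y).
Definition normsq (x : H) : R := fst (inner H x x).
Definition hnorm (x : H) : R := sqrt (normsq x).

Fixpoint hfsum (n : nat) (u : nat -> H) : H :=
  match n with
  | O => hzero H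
  | S m => hadd H (hfsum m u) (u m)
  end.

Definition hconv (u : nat -> H) (l : H) : Prop :=
  forall eps, 0 < eps -> exists N, forall n, (N <= n)%nat -> hnorm (hsub (u n) l) < eps.
Definition hseries (u : nat -> H) (s : H) : Prop :=
  hconv (fun n => hfsum n u) s.

Definition separable : Prop :=
  exists D : nat -> H, forall x eps, 0 < eps -> exists n, hnorm (hsub x (D n)) < eps.

Definition lin_indep (n : nat) (v : nat -> H) : Prop :=
  forall c : nat -> Cpx, hfsum n (fun i => hscal H (c i) (v i)) = hzero H ->
    forall i, (i < n)%nat -> c i = C0.

Definition infinite_dimensional : Prop :=
  forall n, exists v : nat -> H, lin_indep n v.

Definition coef_sum (f : nat -> H) (x : H) (l : R) : Prop :=
  infinite_sum (fun n => Cabs2 (inner H x (f n))) l.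

Definition Bessel_bound (f : nat -> H) (B : R) : Prop :=
  forall x, exists l, coef_sum f x l /\ l <= B * normsq x.
Definition Bessel (f : nat -> H) : Prop := exists B, Bessel_bound f B.
Definition optimal_Bessel_bound (f : nat -> H) (B : R) : Prop :=
  Bessel_bound f B /\ forall B', Bessel_bound f B' -> B <= B'.

Definition frame (f : nat -> H) : Prop :=
  exists A B, 0 < A /\ forall x, exists l, coef_sum f x l /\
     A * normsq x <= l /\ l <= B * normsq x.

(** kernel of the analysis operator U x = (<x, f n>)_n *)
Definition kerU (f : nat -> H) (x : H) : Prop := forall n, inner H x (f n) = C0.

(** the synthesis of the analysis: V^* U x = sum_n <x, f n> g n *)
Definition VstarU (g f : nat -> H) (x y : H) : Prop :=
  hseries (fun n => hscal H (inner H x (f n)) (g n)) y.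

Definition compact_op (T : H -> H) : Prop :=
  forall u : nat -> H, (exists M, forall k, hnorm (u k) <= M) ->
    exists (phi : nat -> nat) (y : H),
      (forall k, (phi k < phi (S k))%nat) /\ hconv (fun k => T (u (phi k))) y.

Definition in_span (d : nat) (w : nat -> H) (x : H) : Prop :=
  exists c : nat -> Cpx, x = hfsum d (fun i => hscal H (c i) (w i)).

Definition is_basis_of (S : H -> Prop) (d : nat) (w : nat -> H) : Prop :=
  (forall i, (i < d)%nat -> S (w i)) /\ lin_indep d w /\
  (forall x, S x -> in_span d w x).

Definition has_dim (S : H -> Prop) (d : nat) : Prop :=
  exists w, is_basis_of S d w.

Definition is_ONB_of (S : H -> Prop) (d : nat) (w : nat -> H) : Prop :=
  (forall i, (i < d)%nat -> S (w i)) /\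
  (forall i j, (i < d)%nat -> (j < d)%nat ->
      inner H (w i) (w j) = if Nat.eqb i j then C1 else C0) /\
  (forall x, S x -> in_span d w x).

(** (x_n)_{n<k} ∪ (f_n)_n, indexed by nat *)
Definition prepend (k : nat) (x : nat -> H) (f : nat -> H) : nat -> H :=
  fun n => if Nat.ltb n k then x n else f (n - k)%nat.

End HDefs.

(* Main.v *)
Require Import Defs.
From Stdlib Require Import Reals.
Open Scope R_scope.
From Stdlib Require Import Lra Lia Psatz.
From Stdlib Require Import ClassicalEpsilon Classical.
Require Import Defs.

Lemma pair_eq (a b c d : R) : a = c -> b = d -> (a, b) = (c, d).
Proof. intros -> ->; reflexivity. Qed.


Arguments hadd_assoc {c} x y z.
Arguments hadd_comm {c} x y.
Arguments hadd_zero {c} x.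
Arguments hadd_opp {c} x.
Arguments hscal_assoc {c} a b x.
Arguments hscal_one {c} x.
Arguments hscal_distr_vec {c} a x y.
Arguments hscal_distr_scal {c} a b x.
Arguments inner_add_l {c} x y z.
Arguments inner_scal_l {c} a x y.
Arguments inner_conj {c} x y.
Arguments inner_pos {c} x.
Arguments inner_def {c} x.

Ltac cunf := unfold Cadd, Cmul, Cconj, Cabs2, C0, C1, RtoC in *; simpl in *.
Lemma Cpx_eq (a b : Cpx) : fst a = fst b -> snd a = snd b -> a = b.
Proof. destruct a, b; simpl; intros -> ->; reflexivity. Qed.
Ltac cgen := repeat match goal with
 | |- context [fst ?t] => destruct t; simpl
 | |- context [snd ?t] => destruct t; simpl end.
Ltac cring := cunf; try (apply Cpx_eq); simpl; cgen; ring.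

Section Alg.
Context {H : CHilbert}.
Implicit Types x y z : H.

Lemma hadd_zero_l x : hadd H (hzero H) x = x.
Proof. rewrite hadd_comm; apply hadd_zero. Qed.

Lemma hadd_cancel x y z : hadd H x y = hadd H x z -> y = z.
Proof.
  intros E. assert (E2: hadd H (hopp H x) (hadd H x y) = hadd H (hopp H x) (hadd H x z)) by now rewrite E.
  rewrite !hadd_assoc, (hadd_comm (hopp H x) x), hadd_opp, !hadd_zero_l in E2. exact E2.
Qed.

Lemma zero_unique z : hadd H z z = z -> z = hzero H.
Proof. intros E. apply (hadd_cancel z). rewrite E, hadd_zero. reflexivity. Qed.

Lemma hscal_zero_c x : hscal H C0 x = hzero H.
Proof.
  apply zero_unique. rewrite <- hscal_distr_scal. f_equal. cring.
Qed.

Lemma hscal_zero_v a : hscal H a (hzero H) = hzero H.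
Proof.
  apply zero_unique. rewrite <- hscal_distr_vec, hadd_zero. reflexivity.
Qed.

Lemma hopp_scal x : hopp H x = hscal H (-1, 0) x.
Proof.
  apply (hadd_cancel x). rewrite hadd_opp.
  rewrite <- (hscal_one x) at 1. rewrite <- hscal_distr_scal.
  replace (Cadd C1 (-1,0)) with C0 by cring. now rewrite hscal_zero_c.
Qed.

Lemma inner_zero_l y : inner H (hzero H) y = C0.
Proof. rewrite <- (hscal_zero_c y), inner_scal_l. cring. Qed.

Lemma inner_zero_r y : inner H y (hzero H) = C0.
Proof. rewrite inner_conj, inner_zero_l. cring. Qed.

Lemma inner_add_r x y z : inner H x (hadd H y z) = Cadd (inner H x y) (inner H x z).
Proof. rewrite inner_conj, inner_add_l, (inner_conj y x), (inner_conj z x). cring. Qed.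

Lemma inner_scal_r a x y : inner H x (hscal H a y) = Cmul (Cconj a) (inner H x y).
Proof. rewrite inner_conj, inner_scal_l, (inner_conj y x). cring. Qed.

Lemma inner_sub_l x y z : inner H (hsub x y) z = Cadd (inner H x z) (Cmul (-1,0) (inner H y z)).
Proof. unfold hsub. rewrite inner_add_l, hopp_scal, inner_scal_l. reflexivity. Qed.

Lemma inner_sub_r x y z : inner H z (hsub x y) = Cadd (inner H z x) (Cmul (-1,0) (inner H z y)).
Proof. unfold hsub. rewrite inner_add_r, hopp_scal, inner_scal_r. f_equal. cring. Qed.

Lemma inner_self_snd x : snd (inner H x x) = 0.
Proof.
  pose proof (inner_conj x x) as E. destruct (inner H x x) as [a b]. cunf.
  injection E; intros; lra.
Qed.

Lemma inner_self x : inner H x x = (normsq x, 0).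
Proof.
  unfold normsq. pose proof (inner_self_snd x). destruct (inner H x x); simpl in *; now subst.
Qed.

Lemma normsq_nonneg x : 0 <= normsq x.
Proof. apply inner_pos. Qed.

Lemma normsq_zero x : normsq x = 0 -> x = hzero H.
Proof. intros E. apply inner_def. rewrite inner_self, E. reflexivity. Qed.

Lemma hsub_self x : hsub x x = hzero H.
Proof. apply hadd_opp. Qed.

Lemma hsub_add x y : hadd H (hsub x y) y = x.
Proof.
  unfold hsub. rewrite <- hadd_assoc, (hadd_comm (hopp H y)), hadd_opp, hadd_zero. reflexivity.
Qed.

Lemma hsub_zero x : hsub x (hzero H) = x.
Proof. unfold hsub. rewrite hopp_scal, hscal_zero_v, hadd_zero. reflexivity. Qed.

Lemma hsub_chain x y z : hsub x z = hadd H (hsub x y) (hsub y z).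
Proof.
  unfold hsub. rewrite !hadd_assoc. f_equal. rewrite <- hadd_assoc, (hadd_comm (hopp H y)), hadd_opp, hadd_zero.
  reflexivity.
Qed.

Lemma normsq_scal a x : normsq (hscal H a x) = Cabs2 a * normsq x.
Proof.
  unfold normsq. rewrite inner_scal_l, inner_scal_r, inner_self. cring.
Qed.

Lemma normsq_add x y : normsq (hadd H x y) = normsq x + normsq y + 2 * fst (inner H x y).
Proof.
  unfold normsq. rewrite inner_add_l, !inner_add_r, (inner_conj y x).
  destruct (inner H x y). cunf. ring.
Qed.

Lemma normsq_sub x y : normsq (hsub x y) = normsq x + normsq y - 2 * fst (inner H x y).
Proof.
  unfold hsub. rewrite normsq_add, hopp_scal, normsq_scal, inner_scal_r. cunf.
  destruct (inner H x y). simpl. ring.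
Qed.

Lemma normsq_add_le x y : normsq (hadd H x y) <= 2 * normsq x + 2 * normsq y.
Proof.
  pose proof (normsq_add x y). pose proof (normsq_sub x y). pose proof (normsq_nonneg (hsub x y)). lra.
Qed.

Lemma normsq_sub_le x y z : normsq (hsub x z) <= 2 * normsq (hsub x y) + 2 * normsq (hsub y z).
Proof. rewrite (hsub_chain x y z). apply normsq_add_le. Qed.

Lemma pythag x y : inner H x y = C0 -> normsq (hadd H x y) = normsq x + normsq y.
Proof. intros E. rewrite normsq_add, E. cunf. ring. Qed.

Fixpoint Csum (n : nat) (a : nat -> Cpx) : Cpx :=
  match n with O => C0 | S m => Cadd (Csum m a) (a m) end.
Fixpoint rsum (n : nat) (a : nat -> R) : R :=
  match n with O => 0 | S m => rsum m a + a m end.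

End Alg.

Section Sums.
Context {H : CHilbert}.
Implicit Types x y z : H.

Lemma hfsum_ext n (u v : nat -> H) : (forall i, (i < n)%nat -> u i = v i) -> hfsum n u = hfsum n v.
Proof. induction n; simpl; intros E; auto. rewrite IHn by (intros; apply E; lia). rewrite E by lia. reflexivity. Qed.

Lemma Csum_ext n a b : (forall i, (i < n)%nat -> a i = b i) -> Csum n a = Csum n b.
Proof. induction n; simpl; intros E; auto. rewrite IHn by (intros; apply E; lia). rewrite E by lia. reflexivity. Qed.

Lemma rsum_ext n a b : (forall i, (i < n)%nat -> a i = b i) -> rsum n a = rsum n b.
Proof. induction n; simpl; intros E; auto. rewrite IHn by (intros; apply E; lia). rewrite E by lia. reflexivity. Qed.

Lemma inner_hfsum_l n (u : nat -> H) y : inner H (hfsum n u) y = Csum n (fun i => inner H (u i) y).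
Proof. induction n; simpl. apply inner_zero_l. rewrite inner_add_l, IHn. reflexivity. Qed.

Lemma Csum_zero n a : (forall i, (i < n)%nat -> a i = C0) -> Csum n a = C0.
Proof. induction n; simpl; intros E; auto. rewrite IHn, E by (intros; try apply E; lia). cring. Qed.

Lemma Csum_mul_l n c a : Csum n (fun i => Cmul c (a i)) = Cmul c (Csum n a).
Proof. induction n; simpl. cring. rewrite IHn. cring. Qed.

Lemma Csum_conj n a : Cconj (Csum n a) = Csum n (fun i => Cconj (a i)).
Proof. induction n; simpl. cring. rewrite <- IHn. cring. Qed.

Lemma Csum_fst n a : fst (Csum n a) = rsum n (fun i => fst (a i)).
Proof. induction n; simpl. reflexivity. rewrite <- IHn. reflexivity. Qed.

Lemma Csum_delta n j a : (j < n)%nat -> Csum n (fun i => if Nat.eqb i j then a else C0) = a.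
Proof.
  induction n; intros Hj; [lia|]. simpl.
  destruct (Nat.eq_dec j n).
  - subst. rewrite Nat.eqb_refl. rewrite Csum_zero. cring.
    intros i Hi. destruct (Nat.eqb_spec i n); [lia|auto].
  - rewrite IHn by lia. destruct (Nat.eqb_spec n j); [lia|]. cring.
Qed.

Lemma Csum_delta_mul n j (c : nat -> Cpx) : (j < n)%nat ->
  Csum n (fun i => Cmul (c i) (if Nat.eqb i j then C1 else C0)) = c j.
Proof.
  intros Hj. rewrite <- (Csum_delta n j (c j)) by auto. apply Csum_ext.
  intros i _. destruct (Nat.eqb_spec i j). subst. cring. cring.
Qed.

Lemma rsum_nonneg n a : (forall i, 0 <= a i) -> 0 <= rsum n a.
Proof. induction n; simpl; intros; [lra|]. specialize (IHn H0). specialize (H0 n). lra. Qed.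

Lemma rsum_ge_term n a j : (forall i, 0 <= a i) -> (j < n)%nat -> a j <= rsum n a.
Proof.
  induction n; intros Ha Hj; [lia|]. simpl. destruct (Nat.eq_dec j n).
  - subst. pose proof (rsum_nonneg n a Ha). lra.
  - pose proof (IHn Ha ltac:(lia)). specialize (Ha n). lra.
Qed.

Lemma rsum_scal n c a : rsum n (fun i => c * a i) = c * rsum n a.
Proof. induction n; simpl. ring. rewrite IHn. ring. Qed.

Lemma hadd_swap4 (a b c d : H) : hadd H (hadd H a b) (hadd H c d) = hadd H (hadd H a c) (hadd H b d).
Proof.
  rewrite <- !hadd_assoc. f_equal. rewrite !hadd_assoc. f_equal. apply hadd_comm.
Qed.

Lemma hfsum_add n (u v : nat -> H) : hfsum n (fun i => hadd H (u i) (v i)) = hadd H (hfsum n u) (hfsum n v).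
Proof. induction n; simpl. now rewrite hadd_zero. rewrite IHn. apply hadd_swap4. Qed.

Lemma hfsum_scal n a (u : nat -> H) : hscal H a (hfsum n u) = hfsum n (fun i => hscal H a (u i)).
Proof. induction n; simpl. apply hscal_zero_v. rewrite hscal_distr_vec, IHn. reflexivity. Qed.

Lemma hfsum_zero n : hfsum n (fun _ => hzero H) = hzero H.
Proof. induction n; simpl; auto. rewrite IHn. apply hadd_zero. Qed.

Definition ON (d : nat) (w : nat -> H) : Prop :=
  forall i j, (i < d)%nat -> (j < d)%nat -> inner H (w i) (w j) = if Nat.eqb i j then C1 else C0.

Definition comb (d : nat) (c : nat -> Cpx) (w : nat -> H) : H := hfsum d (fun i => hscal H (c i) (w i)).

Definition proj (d : nat) (w : nat -> H) (x : H) : H := comb d (fun i => inner H x (w i)) w.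

Lemma inner_comb_l d c w y : inner H (comb d c w) y = Csum d (fun i => Cmul (c i) (inner H (w i) y)).
Proof. unfold comb. rewrite inner_hfsum_l. apply Csum_ext. intros. apply inner_scal_l. Qed.

Lemma inner_comb_r d c w y : inner H y (comb d c w) = Cconj (Csum d (fun i => Cmul (c i) (inner H (w i) y))).
Proof. rewrite inner_conj, inner_comb_l. reflexivity. Qed.

Lemma inner_comb_ON d c w j : ON d w -> (j < d)%nat -> inner H (comb d c w) (w j) = c j.
Proof.
  intros Hw Hj. rewrite inner_comb_l. rewrite <- (Csum_delta_mul d j c Hj).
  apply Csum_ext. intros i Hi. rewrite Hw; auto.
Qed.

Lemma inner_perp_comb d c w y : (forall i, (i < d)%nat -> inner H y (w i) = C0) ->
  inner H y (comb d c w) = C0.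
Proof.
  intros E. rewrite inner_comb_r, Csum_zero. cring.
  intros i Hi. rewrite inner_conj, E by auto. cring.
Qed.

Lemma proj_inner d w x j : ON d w -> (j < d)%nat -> inner H (proj d w x) (w j) = inner H x (w j).
Proof. intros. unfold proj. apply inner_comb_ON; auto. Qed.

Lemma proj_perp d w x j : ON d w -> (j < d)%nat -> inner H (hsub x (proj d w x)) (w j) = C0.
Proof. intros. rewrite inner_sub_l, proj_inner by auto. cring. Qed.

Lemma normsq_proj d w x : ON d w -> normsq (proj d w x) = rsum d (fun i => Cabs2 (inner H x (w i))).
Proof.
  intros Hw. unfold normsq. unfold proj at 1. rewrite inner_comb_l, Csum_fst. apply rsum_ext.
  intros i Hi. rewrite (inner_conj (proj d w x) (w i)), proj_inner by auto. cring.
Qed.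

Lemma pythag_proj d w x : ON d w -> normsq x = normsq (hsub x (proj d w x)) + normsq (proj d w x).
Proof.
  intros Hw. rewrite <- pythag. now rewrite hsub_add.
  unfold proj. apply inner_perp_comb. intros. apply proj_perp; auto.
Qed.

Lemma bessel_fin d w x : ON d w -> rsum d (fun i => Cabs2 (inner H x (w i))) <= normsq x.
Proof.
  intros Hw. rewrite <- normsq_proj by auto. rewrite (pythag_proj d w x Hw).
  pose proof (normsq_nonneg (hsub x (proj d w x))). lra.
Qed.

Lemma Cabs2_nonneg a : 0 <= Cabs2 a.
Proof. destruct a; cunf; nra. Qed.

Lemma bessel_one d w x j : ON d w -> (j < d)%nat -> Cabs2 (inner H x (w j)) <= normsq x.
Proof.
  intros Hw Hj. eapply Rle_trans; [|apply (bessel_fin d w x Hw)].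
  apply (rsum_ge_term d (fun i => Cabs2 (inner H x (w i)))); auto. intros; apply Cabs2_nonneg.
Qed.

Lemma ON_lin_indep d w : ON d w -> lin_indep d w.
Proof.
  intros Hw c E i Hi. pose proof (inner_comb_ON d c w i Hw Hi) as F. unfold comb in F.
  rewrite E, inner_zero_l in F. auto.
Qed.

End Sums.

Section Span.
Context {H : CHilbert}.
Implicit Types x y z : H.

Definition subsp (S : H -> Prop) : Prop :=
  S (hzero H) /\ (forall x y, S x -> S y -> S (hadd H x y)) /\ (forall a x, S x -> S (hscal H a x)).

Lemma subsp_sub S x y : subsp S -> S x -> S y -> S (hsub x y).
Proof. intros (H0 & Ha & Hs) ? ?. unfold hsub. rewrite hopp_scal. auto. Qed.

Lemma comb_in S d c w : subsp S -> (forall i, (i < d)%nat -> S (w i)) -> S (comb d c w).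
Proof.
  intros HS Hw. destruct HS as (H0 & Ha & Hs). unfold comb. induction d; simpl; auto.
  apply Ha. apply IHd. intros; apply Hw; lia. apply Hs, Hw. lia.
Qed.

Lemma span_subsp d w : subsp (in_span d w).
Proof.
  split; [|split].
  - exists (fun _ => C0). rewrite <- (hfsum_zero d). apply hfsum_ext. intros. now rewrite hscal_zero_c.
  - intros x y [c ->] [c' ->]. exists (fun i => Cadd (c i) (c' i)). rewrite <- hfsum_add.
    apply hfsum_ext. intros. symmetry. apply hscal_distr_scal.
  - intros a x [c ->]. exists (fun i => Cmul a (c i)). rewrite hfsum_scal. apply hfsum_ext.
    intros. rewrite hscal_assoc. reflexivity.
Qed.

Lemma span_in S d w x : subsp S -> (forall i, (i < d)%nat -> S (w i)) -> in_span d w x -> S x.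
Proof. intros HS Hw [c ->]. apply (comb_in S d c w HS Hw). Qed.

Lemma span_mono n w x : in_span n w x -> in_span (S n) w x.
Proof.
  intros [c ->]. exists (fun i => if Nat.eqb i n then C0 else c i). simpl.
  rewrite Nat.eqb_refl, hscal_zero_c, hadd_zero. apply hfsum_ext. intros i Hi.
  destruct (Nat.eqb_spec i n); [lia|auto].
Qed.

Lemma hfsum_delta n j (w : nat -> H) : (j < n)%nat ->
  hfsum n (fun i => hscal H (if Nat.eqb i j then C1 else C0) (w i)) = w j.
Proof.
  induction n; intros Hj; [lia|]. simpl. destruct (Nat.eq_dec j n).
  - subst. rewrite Nat.eqb_refl, hscal_one. rewrite (hfsum_ext _ _ (fun _ => hzero H)), hfsum_zero.
    apply hadd_zero_l. intros i Hi. destruct (Nat.eqb_spec i n); [lia|]. apply hscal_zero_c.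
  - rewrite IHn by lia. destruct (Nat.eqb_spec n j); [lia|]. rewrite hscal_zero_c. apply hadd_zero.
Qed.

Lemma span_elem n (w : nat -> H) j : (j < n)%nat -> in_span n w (w j).
Proof. intros. exists (fun i => if Nat.eqb i j then C1 else C0). now rewrite hfsum_delta. Qed.

Definition upd (e : nat -> H) (n : nat) (y : H) : nat -> H := fun i => if Nat.eqb i n then y else e i.

Lemma C1_neq_C0 : C1 <> C0.
Proof. unfold C1, C0. intros E. injection E. lra. Qed.

Lemma inner_RtoC_self r z : inner H (hscal H (RtoC r) z) (hscal H (RtoC r) z) = (r * r * normsq z, 0).
Proof. rewrite inner_scal_l, inner_scal_r, inner_self. cring. Qed.

Lemma extend n e x : ON n e -> ~ in_span n e x ->
  exists y, ON (S n) (upd e n y) /\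
    (forall S, subsp S -> S x -> (forall i, (i < n)%nat -> S (e i)) -> S y).
Proof.
  intros Hon Hns. set (z := hsub x (proj n e x)).
  assert (Nz : 0 < normsq z).
  { destruct (normsq_nonneg z) as [|E]; auto. exfalso. apply Hns.
    symmetry in E. apply normsq_zero in E. exists (fun i => inner H x (e i)).
    assert (Ex : x = proj n e x) by (rewrite <- (hsub_add x (proj n e x)) at 1; fold z; rewrite E, hadd_zero_l; reflexivity).
    exact Ex. }
  set (r := / sqrt (normsq z)).
  exists (hscal H (RtoC r) z). split.
  - assert (Hzp : forall j, (j < n)%nat -> inner H (hscal H (RtoC r) z) (e j) = C0).
    { intros j Hj. rewrite inner_scal_l. unfold z. rewrite proj_perp by auto. cring. }
    intros i j Hi Hj. unfold upd.
    destruct (Nat.eqb_spec i n), (Nat.eqb_spec j n).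
    + subst. rewrite Nat.eqb_refl. rewrite inner_RtoC_self. unfold C1. apply pair_eq; auto.
      unfold r. rewrite <- Rinv_mult, sqrt_sqrt by lra. field. lra.
    + rewrite Hzp by lia. destruct (Nat.eqb_spec i j); [lia|auto].
    + rewrite inner_conj, Hzp by lia. destruct (Nat.eqb_spec i j); [lia|]. cring.
    + apply Hon; lia.
  - intros S HS Hx He. destruct HS as (H0 & Ha & Hs). apply Hs. unfold z.
    apply subsp_sub; [split; auto|auto|]. unfold proj; apply comb_in; [split; auto|auto].
Qed.

Lemma lin_indep_restrict n (u : nat -> H) : lin_indep (S n) u -> lin_indep n u.
Proof.
  intros Hl c E i Hi. specialize (Hl (fun i => if Nat.eqb i n then C0 else c i)).
  simpl in Hl. rewrite Nat.eqb_refl, hscal_zero_c, hadd_zero in Hl.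
  assert (Hc : forall i, (i < S n)%nat -> (if Nat.eqb i n then C0 else c i) = C0).
  { apply Hl. rewrite <- E. apply hfsum_ext. intros j Hj. destruct (Nat.eqb_spec j n); [lia|auto]. }
  specialize (Hc i ltac:(lia)). destruct (Nat.eqb_spec i n); [lia|auto].
Qed.

Lemma GS n (u : nat -> H) : lin_indep n u -> exists e, ON n e /\ forall i, (i < n)%nat -> in_span n u (e i).
Proof.
  induction n; intros Hl.
  - exists u. split; [intros i j Hi; lia | intros; lia].
  - destruct (IHn (lin_indep_restrict n u Hl)) as [e [Hon Hsp]].
    assert (Hns : ~ in_span n e (u n)).
    { intros Hin. assert (Hu : in_span n u (u n)) by (apply (span_in _ n e); auto; apply span_subsp).
      destruct Hu as [a Ea].
      assert (Hz := Hl (fun i => if Nat.eqb i n then (-1,0) else a i)). simpl in Hz.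
      rewrite Nat.eqb_refl in Hz.
      assert (E2 : hfsum n (fun i => hscal H (if Nat.eqb i n then (-1, 0) else a i) (u i)) = hfsum n (fun i => hscal H (a i) (u i))).
      { apply hfsum_ext. intros j Hj. destruct (Nat.eqb_spec j n); [lia|auto]. }
      rewrite E2, <- Ea, <- hopp_scal, hadd_opp in Hz. specialize (Hz eq_refl n ltac:(lia)).
      rewrite Nat.eqb_refl in Hz. unfold C0 in Hz. injection Hz. lra. }
    destruct (extend n e (u n) Hon Hns) as [y [Hon' Hy]].
    exists (upd e n y). split; auto. intros i Hi. unfold upd. destruct (Nat.eqb_spec i n).
    + apply Hy. apply span_subsp. apply span_elem. lia. intros j Hj. apply span_mono. auto.
    + apply span_mono. apply Hsp. lia.
Qed.

Lemma Cmul_eq0 a b : Cmul a b = C0 -> b <> C0 -> a = C0.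
Proof.
  destruct a as [a1 a2], b as [b1 b2]. unfold Cmul, C0. simpl. intros E Nb. injection E. intros E2 E1.
  assert (Hb : b1 * b1 + b2 * b2 <> 0).
  { intros Z. apply Nb. assert (b1 = 0) by nra. assert (b2 = 0) by nra. subst. reflexivity. }
  assert (P1 : (a1 * b1 - a2 * b2) * b1 = 0) by (rewrite E1; ring).
  assert (P2 : (a1 * b2 + a2 * b1) * b2 = 0) by (rewrite E2; ring).
  assert (P3 : (a1 * b1 - a2 * b2) * b2 = 0) by (rewrite E1; ring).
  assert (P4 : (a1 * b2 + a2 * b1) * b1 = 0) by (rewrite E2; ring).
  assert (a1 * (b1 * b1 + b2 * b2) = 0) by (ring_simplify in P1; ring_simplify in P2; ring_simplify; lra).
  assert (a2 * (b1 * b1 + b2 * b2) = 0) by (ring_simplify in P3; ring_simplify in P4; ring_simplify; lra).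
  apply pair_eq; apply (Rmult_eq_reg_r (b1 * b1 + b2 * b2)); lra.
Qed.

Definition swapi (j0 m' i : nat) : nat := if Nat.eqb i j0 then m' else if Nat.eqb i m' then j0 else i.

Lemma swapi_lt j0 m' m i : (j0 < m)%nat -> (m' < m)%nat -> (i < m)%nat -> (swapi j0 m' i < m)%nat.
Proof. unfold swapi. destruct (Nat.eqb_spec i j0), (Nat.eqb_spec i m'); lia. Qed.

Lemma swapi_eqb j0 m' i j : Nat.eqb (swapi j0 m' i) (swapi j0 m' j) = Nat.eqb i j.
Proof.
  unfold swapi. destruct (Nat.eqb_spec i j0), (Nat.eqb_spec i m'), (Nat.eqb_spec j j0), (Nat.eqb_spec j m');
  subst; repeat match goal with |- context [Nat.eqb ?a ?b] => destruct (Nat.eqb_spec a b) end; auto; lia.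
Qed.

Lemma swap_ON m (e : nat -> H) j0 m' : ON m e -> (j0 < m)%nat -> (m' < m)%nat -> ON m (fun i => e (swapi j0 m' i)).
Proof.
  intros Hon H1 H2 i j Hi Hj. rewrite Hon by (apply swapi_lt; auto). now rewrite swapi_eqb.
Qed.

End Span.

Lemma lemR {H : CHilbert} k : forall m (P : H -> Prop) (u x : nat -> H), (k < m)%nat -> subsp P -> lin_indep m u ->
  (forall i, (i < m)%nat -> P (u i)) ->
  exists z, P z /\ z <> hzero H /\ forall i, (i < k)%nat -> inner H z (x i) = C0.
Proof.
  induction k; intros m P u x Hkm HS Hl Hu;
  destruct (GS m u Hl) as [e [Hon Hsp]];
  assert (He : forall i, (i < m)%nat -> P (e i)) by (intros i Hi; apply (span_in P m u); auto).
  - exists (e 0%nat). split; [apply He; lia|split; [|intros; lia]].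
    intros Z. pose proof (Hon 0%nat 0%nat ltac:(lia) ltac:(lia)) as E. rewrite Z, inner_zero_l in E.
    simpl in E. apply C1_neq_C0. auto.
  - set (S' := fun v => P v /\ inner H v (x k) = C0).
    assert (HS' : subsp S').
    { destruct HS as (H0 & Ha & Hs). split; [|split].
      - split; auto. apply inner_zero_l.
      - intros v w [Sv Pv] [Sw Pw]. split; auto. rewrite inner_add_l, Pv, Pw. cring.
      - intros c v [Sv Pv]. split; auto. rewrite inner_scal_l, Pv. cring. }
    destruct (classic (exists j0, (j0 < m)%nat /\ inner H (e j0) (x k) <> C0)) as [[j0 [Hj0 Hne]]|Hno].
    + destruct m as [|m']; [lia|].
      set (e' := fun i => e (swapi j0 m' i)).
      assert (Hon' : ON (S m') e') by (apply swap_ON; auto).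
      assert (He' : forall i, (i < S m')%nat -> P (e' i)) by (intros; apply He, swapi_lt; auto).
      assert (Ep : e' m' = e j0).
      { unfold e', swapi. destruct (Nat.eqb_spec m' j0); subst; auto. now rewrite Nat.eqb_refl. }
      set (a := inner H (e j0) (x k)).
      set (u' := fun j => hsub (hscal H a (e' j)) (hscal H (inner H (e' j) (x k)) (e j0))).
      destruct (IHk m' S' u' x) as [z [[Sz Pz] [Nz Hz]]]; auto; try lia.
      * intros b E i Hi.
        assert (Hin : inner H (comb m' b u') (e' i) = Cmul (b i) a).
        { rewrite inner_comb_l. rewrite <- (Csum_delta_mul m' i (fun j => Cmul (b j) a)) by auto.
          apply Csum_ext. intros j Hj. unfold u'. rewrite inner_sub_l, !inner_scal_l.
          rewrite <- Ep, Hon', (Hon' m' i) by lia. destruct (Nat.eqb_spec m' i); [lia|]. cring. }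
        unfold comb in Hin. rewrite E, inner_zero_l in Hin. symmetry in Hin.
        apply (Cmul_eq0 _ a); auto.
      * intros j Hj. split.
        -- apply subsp_sub; auto; apply HS; auto; apply He; auto.
        -- unfold u'. rewrite inner_sub_l, !inner_scal_l. unfold a. cring.
      * exists z. split; auto. split; auto. intros i Hi. destruct (Nat.eq_dec i k); subst; auto.
        apply Hz; lia.
    + destruct (IHk m S' e x) as [z [[Sz Pz] [Nz Hz]]]; auto; try lia.
      * apply ON_lin_indep; auto.
      * intros i Hi. split; auto. apply NNPP. intros Hn. apply Hno. exists i. auto.
      * exists z. split; auto. split; auto. intros i Hi. destruct (Nat.eq_dec i k); subst; auto.
        apply Hz; lia.
Qed.

Lemma isum_cv s l : infinite_sum s l <-> Un_cv (sum_f_R0 s) l.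
Proof. split; auto. Qed.

Lemma isum_ext a b l : (forall n, a n = b n) -> infinite_sum a l -> infinite_sum b l.
Proof.
  intros E Ha. apply isum_cv. apply isum_cv in Ha. intros eps He. destruct (Ha eps He) as [N HN].
  exists N. intros n Hn. rewrite (sum_eq b a) by (intros; auto). auto.
Qed.

Lemma isum_le a b l m : (forall n, a n <= b n) -> infinite_sum a l -> infinite_sum b m -> l <= m.
Proof.
  intros E Ha Hb. eapply Rle_cv_lim; [|exact Ha|exact Hb].
  intros n. apply sum_Rle. intros; auto.
Qed.

Lemma isum_zero : infinite_sum (fun _ => 0) 0.
Proof.
  assert (Z : forall n, sum_f_R0 (fun _ => 0) n = 0) by (induction n; simpl; lra).
  intros eps He. exists 0%nat. intros n _. unfold R_dist. rewrite Z, Rminus_0_r, Rabs_R0. auto.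
Qed.

Lemma cv_const c : Un_cv (fun _ => c) c.
Proof. intros e He. exists 0%nat. intros n _. unfold R_dist. replace (c - c) with 0 by ring. rewrite Rabs_R0. auto. Qed.

Lemma isum_scal c a l : infinite_sum a l -> infinite_sum (fun n => c * a n) (c * l).
Proof.
  intros Ha. apply isum_cv. apply isum_cv in Ha.
  assert (E : forall n, sum_f_R0 (fun n => c * a n) n = sum_f_R0 a n * c).
  { induction n; simpl; [ring|]. rewrite IHn. ring. }
  intros eps He. destruct (CV_mult (sum_f_R0 a) (fun _ => c) l c Ha (cv_const c) eps He) as [N HN].
  exists N. intros n Hn. rewrite E. rewrite Rmult_comm with (r1 := c). auto.
Qed.

Lemma isum_plus a b l m : infinite_sum a l -> infinite_sum b m -> infinite_sum (fun n => a n + b n) (l + m).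
Proof.
  intros Ha Hb. apply isum_cv. apply isum_cv in Ha, Hb. intros eps He.
  destruct (CV_plus _ _ _ _ Ha Hb eps He) as [N HN]. exists N. intros n Hn.
  rewrite sum_plus. auto.
Qed.

Lemma sum_rsum a n : sum_f_R0 a n = rsum (S n) a.
Proof. induction n; simpl; auto. ring. rewrite IHn. reflexivity. Qed.

Lemma isum_nonneg a l : (forall n, 0 <= a n) -> infinite_sum a l -> 0 <= l.
Proof. intros Ha Hs. apply (isum_le (fun _ => 0) a 0 l); auto. apply isum_zero. Qed.

Lemma rsum_le_isum a l N : (forall n, 0 <= a n) -> infinite_sum a l -> rsum N a <= l.
Proof.
  intros Ha Hs. apply Rle_trans with (rsum (S N) a).
  simpl. specialize (Ha N). lra. rewrite <- sum_rsum. apply sum_incr; auto.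
Qed.

Lemma term_le_isum a l n : (forall n, 0 <= a n) -> infinite_sum a l -> a n <= l.
Proof.
  intros Ha Hs. apply Rle_trans with (rsum (S n) a). simpl. pose proof (rsum_nonneg n a Ha). lra.
  apply rsum_le_isum; auto.
Qed.

Lemma isum_prepend d a s l :
  infinite_sum s l -> infinite_sum (fun n => if Nat.ltb n d then a n else s (n - d)%nat) (rsum d a + l).
Proof.
  intros Hs. set (t := fun n => if Nat.ltb n d then a n else s (n - d)%nat).
  assert (Hd : rsum d t = rsum d a).
  { apply rsum_ext. intros i Hi. unfold t. destruct (Nat.ltb_spec i d); [auto|lia]. }
  assert (E : forall m, sum_f_R0 t (d + m) = rsum d a + sum_f_R0 s m).
  { induction m.
    - rewrite sum_rsum, Nat.add_0_r. simpl. rewrite Hd. unfold t. destruct (Nat.ltb_spec d d); [lia|].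
      rewrite Nat.sub_diag. reflexivity.
    - rewrite Nat.add_succ_r. simpl. rewrite IHm. unfold t. destruct (Nat.ltb_spec (S (d + m)) d); [lia|].
      replace (S (d + m) - d)%nat with (S m) by lia. ring. }
  apply isum_cv. apply isum_cv in Hs. intros eps He. destruct (Hs eps He) as [N HN].
  exists (d + N)%nat. intros n Hn. replace n with (d + (n - d))%nat by lia. rewrite E.
  unfold R_dist. replace (rsum d a + sum_f_R0 s (n - d) - (rsum d a + l)) with (sum_f_R0 s (n - d) - l) by ring.
  apply HN. lia.
Qed.

Lemma Cabs2_add_le a b : Cabs2 (Cadd a b) <= 2 * Cabs2 a + 2 * Cabs2 b.
Proof. destruct a as [r r0], b as [r1 r2]. cunf.
 pose proof (Rle_0_sqr (r - r1)); pose proof (Rle_0_sqr (r0 - r2)); unfold Rsqr in *. nra. Qed.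

Lemma Cabs2_mul a b : Cabs2 (Cmul a b) = Cabs2 a * Cabs2 b.
Proof. destruct a, b. cunf. ring. Qed.

Lemma Cabs2_conj a : Cabs2 (Cconj a) = Cabs2 a.
Proof. destruct a. cunf. ring. Qed.

Lemma Cabs2_zero a : Cabs2 a = 0 -> a = C0.
Proof. destruct a as [a b]. cunf. intros. pose proof (Rle_0_sqr a); pose proof (Rle_0_sqr b); unfold Rsqr in *.
 apply pair_eq; nra. Qed.

Lemma Cabs2_RtoC r : 0 <= r -> Cabs2 (RtoC (sqrt r)) = r.
Proof. intros. cunf. rewrite Rmult_0_r, Rplus_0_r. apply sqrt_sqrt; auto. Qed.

Lemma re_mul_le a b t : 0 < t -> 2 * fst (Cmul a b) <= t * Cabs2 a + Cabs2 b / t.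
Proof.
  intros Ht. destruct a as [a1 a2], b as [b1 b2]. cunf.
  assert (E : t * (t * (a1 * a1 + a2 * a2) + (b1 * b1 + b2 * b2) / t - 2 * (a1 * b1 - a2 * b2))
     = (t * a1 - b1) * (t * a1 - b1) + (t * a2 + b2) * (t * a2 + b2)) by (field; lra).
  assert (0 <= t * (t * (a1 * a1 + a2 * a2) + (b1 * b1 + b2 * b2) / t - 2 * (a1 * b1 - a2 * b2))) by (rewrite E; pose proof (Rle_0_sqr (t*a1-b1)); pose proof (Rle_0_sqr (t*a2+b2)); unfold Rsqr in *; lra).
  assert (0 <= t * (a1 * a1 + a2 * a2) + (b1 * b1 + b2 * b2) / t - 2 * (a1 * b1 - a2 * b2)).
  { apply (Rmult_le_reg_l t); auto. lra. }
  lra.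
Qed.

Section Conv.
Context {H : CHilbert}.

Definition nconv (u : nat -> H) (l : H) : Prop :=
  forall eps, 0 < eps -> exists N, forall n, (N <= n)%nat -> normsq (hsub (u n) l) < eps.

Lemma hnorm_sq (x : H) : hnorm x * hnorm x = normsq x.
Proof. unfold hnorm. apply sqrt_sqrt, normsq_nonneg. Qed.

Lemma hnorm_nonneg (x : H) : 0 <= hnorm x.
Proof. apply sqrt_pos. Qed.

Lemma hconv_nconv u l : hconv u l -> nconv u l.
Proof.
  intros Hc eps He. destruct (Hc (sqrt eps) (sqrt_lt_R0 _ He)) as [N HN]. exists N. intros n Hn.
  specialize (HN n Hn). pose proof (hnorm_sq (hsub (u n) l)). pose proof (hnorm_nonneg (hsub (u n) l)).
  pose proof (sqrt_sqrt eps ltac:(lra)). nra.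
Qed.

Lemma nconv_hconv u l : nconv u l -> hconv u l.
Proof.
  intros Hc eps He. destruct (Hc (eps * eps) ltac:(nra)) as [N HN]. exists N. intros n Hn.
  specialize (HN n Hn). pose proof (hnorm_sq (hsub (u n) l)). pose proof (hnorm_nonneg (hsub (u n) l)).
  destruct (Rlt_or_le (hnorm (hsub (u n) l)) eps); auto. nra.
Qed.

Lemma normsq_opp (x : H) : normsq (hopp H x) = normsq x.
Proof. rewrite hopp_scal, normsq_scal. cunf. ring. Qed.

Lemma normsq_sub_sym (x y : H) : normsq (hsub x y) = normsq (hsub y x).
Proof. rewrite !normsq_sub, (inner_conj x y). cunf. destruct (inner H x y). simpl. ring. Qed.

Lemma hsub_eq0 (x y : H) : hsub x y = hzero H -> x = y.
Proof. intros E. rewrite <- (hsub_add x y), E. apply hadd_zero_l. Qed.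

Lemma small_zero r : 0 <= r -> (forall eps, 0 < eps -> r < eps) -> r = 0.
Proof. intros H0 Hs. destruct H0; auto. specialize (Hs r H0). lra. Qed.

End Conv.

Lemma inv_small d : 0 < d -> exists N, forall n, (N <= n)%nat -> / (INR n + 1) < d.
Proof.
  intros Hd. destruct (INR_unbounded (/ d)) as [N HN]. exists N. intros n Hn.
  apply le_INR in Hn. pose proof (pos_INR N).
  assert (0 < / d) by (apply Rinv_0_lt_compat; auto).
  rewrite <- (Rinv_inv d). apply Rinv_lt_contravar. nra. lra.
Qed.

Lemma incr_ge (phi : nat -> nat) : (forall k, (phi k < phi (S k))%nat) -> forall k, (k <= phi k)%nat.
Proof. intros Hp k. induction k. lia. specialize (Hp k). lia. Qed.

Lemma choice_fun {A B : Type} (P : A -> B -> Prop) : (forall a, exists b, P a b) -> exists F : A -> B, forall a, P a (F a).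
Proof.
  intros Hex. exists (fun a => proj1_sig (constructive_indefinite_description _ (Hex a))).
  intros a. exact (proj2_sig (constructive_indefinite_description _ (Hex a))).
Qed.

Lemma subsp_ker {H : CHilbert} (f : nat -> H) : subsp (kerU f).
Proof.
  split; [|split].
  - intros n. apply inner_zero_l.
  - intros x y Hx Hy n. rewrite inner_add_l, Hx, Hy. cring.
  - intros a x Hx n. rewrite inner_scal_l, Hx. cring.
Qed.

Lemma Tfix {H : CHilbert} (g f : nat -> H) (T : H -> H) :
  (forall x, VstarU g f x (hsub x (T x))) -> forall x, kerU f x -> T x = x.
Proof.
  intros HT x Hx. specialize (HT x). unfold VstarU, hseries in HT. apply hconv_nconv in HT.
  assert (Z : forall n, hfsum n (fun n => hscal H (inner H x (f n)) (g n)) = hzero H).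
  { intros n. rewrite <- (hfsum_zero n). apply hfsum_ext. intros i _. rewrite Hx. apply hscal_zero_c. }
  assert (N0 : normsq (hsub x (T x)) = 0).
  { apply small_zero. apply normsq_nonneg. intros eps He. destruct (HT eps He) as [N HN].
    specialize (HN N (Nat.le_refl N)). rewrite Z in HN. unfold hsub at 1 in HN.
    rewrite hadd_zero_l, normsq_opp in HN. auto. }
  apply normsq_zero in N0. symmetry. apply hsub_eq0. auto.
Qed.

Fixpoint iterE {H : CHilbert} (F : nat -> (nat -> H) -> H) (n : nat) : nat -> H :=
  match n with O => fun _ => hzero H | S m => upd (iterE F m) m (F m (iterE F m)) end.

Lemma iterE_stable {H : CHilbert} (F : nat -> (nat -> H) -> H) n i : (i < n)%nat -> iterE F n i = iterE F (S i) i.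
Proof.
  induction n; intros Hi; [lia|]. destruct (Nat.eq_dec i n).
  - subst. reflexivity.
  - simpl. unfold upd at 1. destruct (Nat.eqb_spec i n); [lia|]. apply IHn. lia.
Qed.

Lemma normsq_ON1 {H : CHilbert} (e : nat -> H) i : inner H (e i) (e i) = C1 -> normsq (e i) = 1.
Proof. intros E. unfold normsq. rewrite E. reflexivity. Qed.

Lemma fin_dim {H : CHilbert} (g f : nat -> H) (T : H -> H) :
  compact_op T -> (forall x, VstarU g f x (hsub x (T x))) ->
  exists d w, ON d w /\ (forall i, (i < d)%nat -> kerU f (w i)) /\ forall x, kerU f x -> in_span d w x.
Proof.
  intros Hc HT. apply NNPP. intros Hno.
  assert (Hext : forall n (e : nat -> H), exists y, (ON n e /\ (forall i, (i < n)%nat -> kerU f (e i))) ->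
     kerU f y /\ ON (S n) (upd e n y)).
  { intros n e. destruct (classic (ON n e /\ (forall i, (i < n)%nat -> kerU f (e i)))) as [[Hon Hk]|Hn].
    - assert (Hx : exists x, kerU f x /\ ~ in_span n e x).
      { apply NNPP. intros Hx. apply Hno. exists n, e. split; auto. split; auto. intros x Kx.
        apply NNPP. intros Hs. apply Hx. exists x. auto. }
      destruct Hx as [x [Kx Hs]]. destruct (extend n e x Hon Hs) as [y [Hon' Hy]].
      exists y. intros _. split; auto. apply Hy; auto. apply subsp_ker.
    - exists (hzero H). intros Hh. contradiction. }
  assert (Hch : exists F : nat * (nat -> H) -> H, forall p, (ON (fst p) (snd p) /\ (forall i, (i < fst p)%nat -> kerU f (snd p i))) ->
     kerU f (F p) /\ ON (S (fst p)) (upd (snd p) (fst p) (F p))).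
  { apply (choice_fun (fun p y => (ON (fst p) (snd p) /\ (forall i, (i < fst p)%nat -> kerU f (snd p i))) ->
     kerU f y /\ ON (S (fst p)) (upd (snd p) (fst p) y))). intros [n e]. apply Hext. }
  destruct Hch as [F0 HF]. set (F := fun n e => F0 (n, e)).
  assert (Hinv : forall n, ON n (iterE F n) /\ forall i, (i < n)%nat -> kerU f (iterE F n i)).
  { induction n.
    - split. intros i j Hi; lia. intros; lia.
    - destruct (HF (n, iterE F n) IHn) as [Hk Hon]. simpl in Hk, Hon. split.
      + exact Hon.
      + intros i Hi. simpl. unfold upd. destruct (Nat.eqb_spec i n); auto. apply IHn. lia. }
  set (e := fun i => iterE F (S i) i).
  assert (He : forall i j, inner H (e i) (e j) = if Nat.eqb i j then C1 else C0).
  { intros i j. unfold e. rewrite <- (iterE_stable F (S (Nat.max i j)) i) by lia.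
    rewrite <- (iterE_stable F (S (Nat.max i j)) j) by lia. apply (proj1 (Hinv _)); lia. }
  assert (Hk : forall i, kerU f (e i)) by (intros i; apply (proj2 (Hinv (S i))); lia).
  destruct (Hc e) as [phi [y [Hphi Hconv]]].
  { exists 1. intros k. unfold hnorm. rewrite normsq_ON1 by (rewrite He, Nat.eqb_refl; auto). rewrite sqrt_1. lra. }
  apply hconv_nconv in Hconv. destruct (Hconv (1/4) ltac:(lra)) as [N HN].
  pose proof (HN N (Nat.le_refl _)) as H1. pose proof (HN (S N) ltac:(lia)) as H2.
  rewrite (Tfix g f T HT) in H1, H2 by auto.
  pose proof (normsq_sub_le (e (phi N)) y (e (phi (S N)))) as H3.
  rewrite (normsq_sub_sym y) in H3.
  rewrite normsq_sub, !normsq_ON1, He in H3 by (rewrite He, Nat.eqb_refl; auto).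
  specialize (Hphi N). destruct (Nat.eqb_spec (phi N) (phi (S N))); [lia|]. cunf. lra.
Qed.

Lemma rsum_le n a b : (forall i, a i <= b i) -> rsum n a <= rsum n b.
Proof. induction n; simpl; intros E; [lra|]. specialize (IHn E). specialize (E n). lra. Qed.

Lemma rsum_plus n a b : rsum n (fun i => a i + b i) = rsum n a + rsum n b.
Proof. induction n; simpl; [ring|]. rewrite IHn. ring. Qed.

Lemma Vbound {H : CHilbert} (g f : nat -> H) Bg : Bessel_bound g Bg -> 0 < Bg ->
  forall z v l, VstarU g f z v -> coef_sum f z l -> normsq v <= 2 * Bg * l.
Proof.
  intros HBg Hpos z v l Hv Hl. destruct (HBg v) as [lg [Hlg Hlgb]].
  set (u := fun N => hfsum N (fun n => hscal H (inner H z (f n)) (g n))).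
  assert (C1' : forall N, 2 * fst (inner H (u N) v) <= Bg * l + normsq v).
  { intros N. unfold u. rewrite inner_hfsum_l, Csum_fst.
    rewrite <- rsum_scal.
    eapply Rle_trans.
    { apply (rsum_le N _ (fun i => Bg * Cabs2 (inner H z (f i)) + Cabs2 (inner H v (g i)) / Bg)).
      intros i. rewrite inner_scal_l, (inner_conj v (g i)), <- (Cabs2_conj (inner H v (g i))). apply re_mul_le; auto. }
    rewrite rsum_plus, rsum_scal.
    assert (E1 : rsum N (fun i => Cabs2 (inner H z (f i))) <= l) by (apply rsum_le_isum; auto; intros; apply Cabs2_nonneg).
    assert (E2 : rsum N (fun i => Cabs2 (inner H v (g i)) / Bg) <= normsq v).
    { unfold Rdiv. rewrite (rsum_ext N _ (fun i => / Bg * Cabs2 (inner H v (g i)))) by (intros; ring).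
      rewrite rsum_scal. assert (rsum N (fun i => Cabs2 (inner H v (g i))) <= lg) by (apply rsum_le_isum; auto; intros; apply Cabs2_nonneg).
      apply Rle_trans with (/ Bg * lg). apply Rmult_le_compat_l; auto. left; apply Rinv_0_lt_compat; auto.
      apply Rle_trans with (/ Bg * (Bg * normsq v)). apply Rmult_le_compat_l; auto. left; apply Rinv_0_lt_compat; auto.
      right. field. lra. }
    nra. }
  assert (C2 : forall N, normsq v <= 2 * Bg * l + 4 * normsq (hsub (u N) v)).
  { intros N. specialize (C1' N). pose proof (normsq_sub (u N) v).
    pose proof (normsq_add_le (hsub v (u N)) (u N)). rewrite hsub_add in H1. rewrite normsq_sub_sym in H1. lra. }
  unfold VstarU, hseries in Hv. apply hconv_nconv in Hv.
  destruct (Rle_or_lt (normsq v) (2 * Bg * l)) as [|Hlt]; auto. exfalso.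
  destruct (Hv ((normsq v - 2 * Bg * l) / 8) ltac:(lra)) as [N HN]. specialize (HN N (Nat.le_refl _)).
  specialize (C2 N). unfold u in C2. lra.
Qed.

Section SfL.
Context {H : CHilbert} (f : nat -> H) (Sf : H -> R) (HSf : forall x, coef_sum f x (Sf x)).

Lemma Sf_nonneg x : 0 <= Sf x.
Proof. apply (isum_nonneg _ _ (fun n => Cabs2_nonneg _) (HSf x)). Qed.

Lemma Sf_scale x y c : (forall n, Cabs2 (inner H x (f n)) = c * Cabs2 (inner H y (f n))) -> Sf x = c * Sf y.
Proof.
  intros E. apply (uniqueness_sum (fun n => Cabs2 (inner H x (f n)))). apply HSf.
  apply (isum_ext (fun n => c * Cabs2 (inner H y (f n)))). intros; auto. apply isum_scal, HSf.
Qed.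

Lemma Sf_add_le x y : Sf (hadd H x y) <= 2 * Sf x + 2 * Sf y.
Proof.
  apply (isum_le (fun n => Cabs2 (inner H (hadd H x y) (f n))) (fun n => 2 * Cabs2 (inner H x (f n)) + 2 * Cabs2 (inner H y (f n)))).
  intros n. rewrite inner_add_l. apply Cabs2_add_le. apply HSf.
  apply isum_plus; apply isum_scal, HSf.
Qed.

Lemma Sf_term x n : Cabs2 (inner H x (f n)) <= Sf x.
Proof. apply (term_le_isum (fun n => Cabs2 (inner H x (f n)))). intros; apply Cabs2_nonneg. apply HSf. Qed.

End SfL.

Lemma closed_range {H : CHilbert} (f g : nat -> H) (T : H -> H) Bg Sf Bp d (w : nat -> H) :
  (forall x, coef_sum f x (Sf x)) -> 0 < Bp -> (forall x, Sf x <= Bp * normsq x) ->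
  Bessel_bound g Bg -> 0 < Bg -> compact_op T -> (forall x, VstarU g f x (hsub x (T x))) ->
  ON d w -> (forall i, (i < d)%nat -> kerU f (w i)) -> (forall x, kerU f x -> in_span d w x) ->
  exists c, 0 < c /\ forall x, c * normsq (hsub x (proj d w x)) <= Sf x.
Proof.
  intros HSf HBp HSB HBg HBgp Hc HT Hon Hwk Hsp. apply NNPP. intros Hno.
  assert (Hseq : forall n : nat, exists x, Sf x < / (INR n + 1) * normsq (hsub x (proj d w x))).
  { intros n. apply NNPP. intros Hn. apply Hno. exists (/ (INR n + 1)). split.
    apply Rinv_0_lt_compat. pose proof (pos_INR n). lra.
    intros x. apply Rnot_lt_le. intros Hl. apply Hn. exists x. auto. }
  destruct (choice_fun _ Hseq) as [xs Hxs].
  set (zs := fun n => hsub (xs n) (proj d w (xs n))).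
  assert (Hinvp : forall n, 0 < / (INR n + 1)) by (intros n; apply Rinv_0_lt_compat; pose proof (pos_INR n); lra).
  assert (Nz : forall n, 0 < normsq (zs n)).
  { intros n. specialize (Hxs n). pose proof (Sf_nonneg f Sf HSf (xs n)). specialize (Hinvp n).
    destruct (normsq_nonneg (zs n)); auto. unfold zs in *. rewrite <- H1 in Hxs. lra. }
  set (r := fun n => / sqrt (normsq (zs n))).
  assert (Hr2 : forall n, r n * r n * normsq (zs n) = 1).
  { intros n. unfold r. specialize (Nz n). rewrite <- Rinv_mult, sqrt_sqrt by lra. field. lra. }
  set (ys := fun n => hscal H (RtoC (r n)) (zs n)).
  assert (Hy1 : forall n, normsq (ys n) = 1).
  { intros n. unfold ys. rewrite normsq_scal. rewrite <- (Hr2 n). cunf. ring. }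
  assert (Hyp : forall n i, (i < d)%nat -> inner H (ys n) (w i) = C0).
  { intros n i Hi. unfold ys, zs. rewrite inner_scal_l, proj_perp by auto. cring. }
  assert (HpK : forall x, kerU f (proj d w x)) by (intros x; unfold proj; apply comb_in; auto; apply subsp_ker).
  assert (Hys : forall n, Sf (ys n) < / (INR n + 1)).
  { intros n. assert (E : Sf (ys n) = r n * r n * Sf (xs n)).
    { apply (Sf_scale f Sf HSf). intros k. unfold ys, zs. rewrite inner_scal_l, Cabs2_mul, inner_sub_l, (HpK (xs n) k).
      cunf. ring. }
    rewrite E. specialize (Hxs n). fold (zs n) in Hxs. specialize (Hr2 n). specialize (Nz n).
    assert (0 < r n * r n) by nra.
    apply Rmult_lt_reg_r with (normsq (zs n)); auto.
    replace (r n * r n * Sf (xs n) * normsq (zs n)) with (r n * r n * normsq (zs n) * Sf (xs n)) by ring.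
    rewrite Hr2. lra. }
  destruct (Hc ys) as [phi [y [Hphi Hconv]]].
  { exists 1. intros k. unfold hnorm. rewrite Hy1, sqrt_1. lra. }
  apply hconv_nconv in Hconv.
  assert (HV : forall n, normsq (hsub (ys n) (T (ys n))) <= 2 * Bg * / (INR n + 1)).
  { intros n. eapply Rle_trans. apply (Vbound g f Bg HBg HBgp (ys n) _ (Sf (ys n))); auto.
    specialize (Hys n). nra. }
  assert (Hyc : nconv (fun k => ys (phi k)) y).
  { intros eps He. destruct (Hconv (eps / 4) ltac:(lra)) as [N1 HN1].
    destruct (inv_small (eps / (8 * Bg))) as [N2 HN2]. apply Rdiv_lt_0_compat; lra.
    exists (Nat.max N1 N2). intros n Hn.
    pose proof (normsq_sub_le (ys (phi n)) (T (ys (phi n))) y).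
    specialize (HN1 n ltac:(lia)). pose proof (incr_ge phi Hphi n).
    specialize (HN2 (phi n) ltac:(lia)). specialize (HV (phi n)).
    assert (2 * Bg * / (INR (phi n) + 1) < 2 * Bg * (eps / (8 * Bg))) by (apply Rmult_lt_compat_l; lra).
    assert (2 * Bg * (eps / (8 * Bg)) = eps / 4) by (field; lra). lra. }
  assert (HyK : kerU f y).
  { assert (S0 : Sf y = 0).
    { apply small_zero. apply (Sf_nonneg f Sf HSf). intros eps He.
      destruct (Hyc (eps / (8 * Bp))) as [N1 HN1]. apply Rdiv_lt_0_compat; lra.
      destruct (inv_small (eps / 8)) as [N2 HN2]. lra.
      set (n := Nat.max N1 N2). specialize (HN1 n ltac:(lia)). pose proof (incr_ge phi Hphi n).
      specialize (HN2 (phi n) ltac:(lia)).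
      pose proof (Sf_add_le f Sf HSf (hsub y (ys (phi n))) (ys (phi n))) as Ha. rewrite hsub_add in Ha.
      pose proof (HSB (hsub y (ys (phi n)))). rewrite normsq_sub_sym in H1.
      pose proof (Hys (phi n)).
      assert (Bp * normsq (hsub (ys (phi n)) y) < Bp * (eps / (8 * Bp))) by (apply Rmult_lt_compat_l; lra).
      assert (Bp * (eps / (8 * Bp)) = eps / 8) by (field; lra). lra. }
    intros n. apply Cabs2_zero. apply Rle_antisym. rewrite <- S0. apply (Sf_term f Sf HSf). apply Cabs2_nonneg. }
  assert (Hyw : forall i, (i < d)%nat -> inner H y (w i) = C0).
  { intros i Hi. apply Cabs2_zero. apply small_zero. apply Cabs2_nonneg. intros eps He.
    destruct (Hyc (eps / 4) ltac:(lra)) as [N HN]. specialize (HN N (Nat.le_refl _)).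
    rewrite <- (hsub_add y (ys (phi N))), inner_add_l, Hyp by auto.
    eapply Rle_lt_trans. apply Cabs2_add_le. replace (Cabs2 C0) with 0 by (cunf; ring).
    pose proof (bessel_one d w (hsub y (ys (phi N))) i Hon Hi) as Hb. rewrite normsq_sub_sym in Hb. lra. }
  assert (Y0 : y = hzero H).
  { destruct (Hsp y HyK) as [c Ec]. apply inner_def. rewrite Ec at 2.
    apply (inner_perp_comb d c w y Hyw). }
  destruct (Hyc (1/2) ltac:(lra)) as [N HN]. specialize (HN N (Nat.le_refl _)).
  rewrite Y0, hsub_zero, Hy1 in HN. lra.
Qed.

Theorem mainTheorem4 (H : CHilbert)
  (Hsep : @separable H) (Hinf : @infinite_dimensional H)
  (f : nat -> H) (B : R)
  (HfB : Bessel f) (HB : optimal_Bessel_bound f B)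
  (Hcomp : exists g : nat -> H, Bessel g /\
     exists T : H -> H, compact_op T /\
       forall x, VstarU g f x (hsub x (T x))) :
  exists d : nat,
    has_dim (kerU f) d /\
    (forall (k : nat) (x : nat -> H), frame (prepend k x f) -> (d <= k)%nat) /\
    (forall w : nat -> H, is_ONB_of (kerU f) d w ->
       frame (prepend d (fun n => hscal H (RtoC (sqrt B)) (w n)) f)).
Proof.
  destruct HB as [HBb _].
  destruct (choice_fun _ HBb) as [Sf HSf0].
  assert (HSf : forall x, coef_sum f x (Sf x)) by (intros x; apply HSf0).
  assert (HSB : forall x, Sf x <= B * normsq x) by (intros x; apply HSf0).
  destruct Hcomp as [g [[Bg0 HBg0] [T [Hc HT]]]].
  set (Bg := Rabs Bg0 + 1).
  assert (HBg : Bessel_bound g Bg).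
  { intros x. destruct (HBg0 x) as [l [Hl Hle]]. exists l. split; auto.
    pose proof (Rle_abs Bg0). pose proof (normsq_nonneg x). unfold Bg. nra. }
  assert (HBgp : 0 < Bg) by (unfold Bg; pose proof (Rabs_pos Bg0); lra).
  set (Bp := Rabs B + 1).
  assert (HBp : 0 < Bp) by (unfold Bp; pose proof (Rabs_pos B); lra).
  assert (HSBp : forall x, Sf x <= Bp * normsq x).
  { intros x. pose proof (HSB x). pose proof (Rle_abs B). pose proof (normsq_nonneg x). unfold Bp. nra. }
  destruct (fin_dim g f T Hc HT) as [d [w [Hon [Hwk Hsp]]]].
  exists d. split; [|split].
  - exists w. split; [auto|split; [apply ON_lin_indep; auto| auto]].
  - intros k x [A [B' [HA Hfr]]]. apply NNPP. intros Hk.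
    destruct (lemR k d (kerU f) w x) as [z [Kz [Nz Hz]]]; [lia | apply subsp_ker | apply ON_lin_indep; auto | auto|].
    destruct (Hfr z) as [l [Hl [Hlo Hhi]]].
    assert (L0 : l = 0).
    { apply (uniqueness_sum (fun n => Cabs2 (inner H z (prepend k x f n)))); auto.
      apply (isum_ext (fun _ => 0)); [|apply isum_zero]. intros n. unfold prepend.
      destruct (Nat.ltb_spec n k); [rewrite Hz by auto | rewrite Kz]; cunf; ring. }
    subst l. pose proof (normsq_nonneg z).
    assert (normsq z = 0) by nra. apply Nz. apply normsq_zero. auto.
  - intros w' [Hwk' [Hon' Hsp']].
    destruct (closed_range f g T Bg Sf Bp d w' HSf HBp HSBp HBg HBgp Hc HT Hon' Hwk' Hsp') as [c [Hc0 Hcr]].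
    assert (HBc : c <= B).
    { destruct (Hinf (S d)) as [v Hv].
      destruct (lemR d (S d) (fun _ => True) v w') as [z [_ [Nz Hz]]]; auto.
      split; auto.
      assert (P0 : proj d w' z = hzero H).
      { unfold proj, comb. rewrite <- (hfsum_zero d). apply hfsum_ext. intros i Hi. rewrite Hz by auto.
        apply hscal_zero_c. }
      specialize (Hcr z). rewrite P0, hsub_zero in Hcr. specialize (HSB z).
      destruct (normsq_nonneg z) as [Hp|Hp]; [|exfalso; apply Nz, normsq_zero; auto].
      nra. }
    assert (HB0 : 0 <= B) by lra.
    exists (Rmin c B), (2 * B). split. apply Rmin_glb_lt; lra.
    intros x. set (a := fun n => Cabs2 (inner H x (hscal H (RtoC (sqrt B)) (w' n)))).
    exists (rsum d a + Sf x). split.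
    + unfold coef_sum. eapply isum_ext; [|apply (isum_prepend d a); apply HSf].
      intros n. unfold prepend, a. destruct (Nat.ltb n d); reflexivity.
    + assert (Ea : rsum d a = B * normsq (proj d w' x)).
      { rewrite normsq_proj by auto. rewrite <- rsum_scal. apply rsum_ext. intros i Hi. unfold a.
        rewrite inner_scal_r, Cabs2_mul, Cabs2_conj, Cabs2_RtoC by auto. reflexivity. }
      rewrite Ea. pose proof (pythag_proj d w' x Hon') as Py.
      pose proof (Hcr x). pose proof (HSB x).
      pose proof (normsq_nonneg (hsub x (proj d w' x))). pose proof (normsq_nonneg (proj d w' x)).
      pose proof (Rmin_l c B). pose proof (Rmin_r c B).
      set (N1 := normsq (hsub x (proj d w' x))) in *. set (N2 := normsq (proj d w' x)) in *.
      rewrite Py. split.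
      * assert (Rmin c B * N1 <= c * N1) by (apply Rmult_le_compat_r; auto).
        assert (Rmin c B * N2 <= B * N2) by (apply Rmult_le_compat_r; auto). nra.
      * assert (B * N2 <= B * (N1 + N2)) by (apply Rmult_le_compat_l; lra). rewrite Py in H1. nra.
Qed.
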